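(* Let $p$ be an even positive integer, $0\le\alpha\le1$, and for positive integers $j$ define $$g(j)=\prod_{i=1}^j\frac{i+\alpha}{i+1}\cdot\frac{p-i}{p-i-1+\alpha}.$$ Then $g(j)\simeq\left(\frac{1}{j+1}\right)^{1-\alpha}$ for all $1\le j\le p/2-1$.
   Context: $f\simeq h$ means there are constants $c_1,c_2>0$, not depending on $p$ or $j$, with $c_1h\le f\le c_2h$. *)

(* Defs.v *)
From HB Require Import structures.
From mathcomp Require Import all_boot all_order all_algebra.
From mathcomp Require Import all_classical all_reals all_analysis.
Set Implicit Arguments. Unset Strict Implicit. Unset Printing Implicit Defensive.
Import Order.TTheory GRing.Theory Num.Theory.
Local Open Scope ring_scope.

Definition gC2 {R : realType} (p : nat) (a : R) (j : nat) : R :=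
  \prod_(1 <= i < j.+1)
    ((i%:R + a) / (i.+1)%:R * ((p%:R - i%:R) / (p%:R - i%:R - 1 + a))).

(* Main.v *)
Require Import Defs.
From HB Require Import structures.
From mathcomp Require Import all_boot all_order all_algebra.
From mathcomp Require Import all_classical all_reals all_analysis.
From mathcomp Require Import zify ring lra.
Import Order.TTheory GRing.Theory Num.Theory.
Local Open Scope ring_scope.


Section S.
Variable R : realType.

Lemma conc (y t : R) : 0 < y -> 0 <= t <= 1 -> y `^ t <= 1 - t + t * y.
Proof.
move=> y0 /andP[t0 t1].
have [->|tn0] := eqVneq t 0; first by rewrite powRr0; lra.
have [->|tn1] := eqVneq t 1; first by rewrite powRr1; [lra|exact: ltW].
have tp : 0 < t by rewrite lt_def tn0.
have tl : t < 1 by rewrite lt_def eq_sym tn1.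
have tq : 0 < 1 - t by lra.
have h := @conjugate_powR R (y `^ t) 1 t^-1 (1 - t)^-1 (powR_ge0 _ _) ler01
  (ltac:(by rewrite invr_gt0)) (ltac:(by rewrite invr_gt0)) ltac:(rewrite !invrK; ring).
move: h; rewrite -powRrM mulfV // powRr1; last exact: ltW.
have -> : 1 `^ (1 - t)^-1 = (1:R) by rewrite powR1.
rewrite !invrK mulr1; lra.
Qed.

Lemma conc2 (y t : R) : 0 < y -> 0 <= t <= 1 -> y <= y `^ t * (t + (1 - t) * y).
Proof.
move=> y0 /andP[t0 t1].
have h := @conc y (1 - t) y0 ltac:(apply/andP; split; lra).
have e : y = y `^ t * y `^ (1 - t).
  rewrite -powRD; last by rewrite (gt_eqF y0) implybT. have -> : t + (1 - t) = 1 by ring. by rewrite powRr1 // ltW.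
rewrite {1}e ler_pM2l ?powR_gt0 //. lra.
Qed.

Lemma key (J a : R) : 1 <= J -> 0 <= a <= 1 ->
  (2 - J^-1) * ((J + a) / (J + 1)) <= (2 - (J + 1)^-1) * (J / (J + 1 - a)).
Proof.
move=> J1 /andP[a0 a1].
have Jn : J != 0 by rewrite gt_eqF //; lra.
have J1n : J + 1 != 0 by rewrite gt_eqF //; lra.
have Jan : J + 1 - a != 0 by rewrite gt_eqF //; lra.
have -> : (2 - J^-1) * ((J + a) / (J + 1)) = ((2*J-1)*(J+a)) / (J*(J+1)) by field; rewrite ?Jn ?J1n ?Jan.
have -> : (2 - (J + 1)^-1) * (J / (J + 1 - a)) = ((2*J+1)*J) / ((J+1)*(J+1-a)) by field; rewrite ?Jn ?J1n ?Jan.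
rewrite ler_pdivrMr; last by apply: mulr_gt0; lra.
rewrite mulrAC ler_pdivlMr; last by apply: mulr_gt0; lra.
have c : 4 * (a * (1 - a)) <= 1 by have := sqr_ge0 (2 * a - 1); nra.
have d : a * (1 - a) * (2 * J - 1) <= J.
  have : 0 <= (1 - 4 * (a * (1 - a))) * (2 * J - 1) by apply: mulr_ge0; lra.
  nra.
have e : (2 * J - 1) * (J + a) * (J + 1 - a) <= (2 * J + 1) * J * J by nra.
have -> : (2 * J + 1) * J * (J * (J + 1)) = ((2 * J + 1) * J * J) * (J + 1) by ring.
have -> : (2 * J - 1) * (J + a) * ((J + 1) * (J + 1 - a)) = ((2 * J - 1) * (J + a) * (J + 1 - a)) * (J + 1) by ring.
rewrite ler_pM2r //; lra.
Qed.

Definition P (a : R) (j : nat) := \prod_(1 <= i < j.+1) ((i%:R + a) / (i.+1)%:R).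
Definition Q (p : nat) (a : R) (j : nat) :=
  \prod_(1 <= i < j.+1) ((p%:R - i%:R) / (p%:R - i%:R - 1 + a)).
Definition e (a : R) (j : nat) := ((j.+1)%:R^-1) `^ (1 - a).

Lemma e_ge0 a j : 0 <= e a j. Proof. exact: powR_ge0. Qed.

Lemma Pb a : 0 <= a <= 1 -> forall n, e a n <= P a n /\ P a n <= (2 - (n.+1)%:R^-1) * e a n.
Proof.
move=> /andP[a0 a1]; elim=> [|n [IH1 IH2]].
  rewrite /P /e big_geq // invr1 powR1; lra.
have hP : P a n.+1 = P a n * ((n.+1%:R + a) / (n.+2)%:R) by rewrite /P big_nat_recr.
set J : R := n.+1%:R.
have J1 : 1 <= J by rewrite /J ler1n.
have hS : (n.+2)%:R = J + 1 :> R by rewrite /J -natr1.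
set y := J / (J + 1).
have y0 : 0 < y by rewrite /y divr_gt0 //; lra.
have he : e a n.+1 = y `^ (1 - a) * e a n.
  rewrite /e -powRM ?invr_ge0 ?ler0n ?divr_ge0 //; try lra.
  congr (_ `^ _); rewrite -/J hS /y; field; apply/andP; split; rewrite gt_eqF //; lra.
rewrite hP he hS -/J.
have t01 : 0 <= 1 - a <= 1 by apply/andP; split; lra.
have c1 := @conc y (1 - a) y0 t01.
have c2 := @conc2 y (1 - a) y0 t01.
have hy : 1 - (1 - a) + (1 - a) * y = (J + a) / (J + 1).
  rewrite /y; field; rewrite gt_eqF //; lra.
have e0 := e_ge0 a n.
have z0 : 0 < y `^ (1 - a) by apply: powR_gt0.
split.
  rewrite [X in X <= _]mulrC; apply: ler_pM => //; first exact: ltW.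
  by rewrite -hy.
have hz : J <= y `^ (1 - a) * (J + 1 - a).
  have -> : J + 1 - a = (1 - a + (1 - (1 - a)) * y) * (J + 1).
    rewrite /y; field; rewrite gt_eqF //; lra.
  rewrite mulrA -ler_pdivrMr; last lra.
  exact: c2.
have k := @key J a J1 ltac:(apply/andP; split; lra).
have Ja0 : 0 < J + 1 - a by lra.
have hz' : J / (J + 1 - a) <= y `^ (1 - a) by rewrite ler_pdivrMr.
apply: (le_trans (y := (2 - J^-1) * e a n * ((J + a) / (J + 1)))).
  apply: ler_wpM2r; last exact: IH2.
  apply: divr_ge0; lra.
rewrite mulrAC.
have -> : (2 - (J + 1)^-1) * (y `^ (1 - a) * e a n) = ((2 - (J + 1)^-1) * y `^ (1 - a)) * e a n by ring.
apply: ler_wpM2r => //.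
apply: (le_trans k).
apply: ler_wpM2l => //.
have : (J + 1)^-1 <= 1 by rewrite invf_le1; lra.
lra.
Qed.

Lemma Qb p a : 0 <= a <= 1 -> forall n, (2 * n + 2 <= p)%N ->
  1 <= Q p a n /\ Q p a n <= (p%:R - 1) / (p%:R - 1 - n%:R).
Proof.
move=> /andP[a0 a1]; elim=> [|n IH] hn.
  have hp : (2 <= p)%N by lia.
  have hp' : 2 <= p%:R :> R by rewrite (ler_nat R 2 p).
  rewrite /Q big_geq // subr0 divff; first lra.
  rewrite gt_eqF //; lra.
have [IH1 IH2] := IH ltac:(lia).
have hQ : Q p a n.+1 = Q p a n * ((p%:R - n.+1%:R) / (p%:R - n.+1%:R - 1 + a)) by rewrite /Q big_nat_recr.
have hp' : (2 * n + 4)%:R <= p%:R :> R by rewrite ler_nat; lia.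
rewrite natrD natrM in hp'.
set N : R := n%:R in hp' IH2 *.
set pr : R := p%:R in hp' IH1 IH2 hQ *.
have N0 : 0 <= N by rewrite /N ler0n.
rewrite hQ.
have -> : (n.+1)%:R = N + 1 :> R by rewrite -natr1.
have d0 : 0 < pr - (N + 1) - 1 + a by lra.
have d1 : 0 < pr - (N + 1) - 1 by lra.
have t1 : 1 <= (pr - (N + 1)) / (pr - (N + 1) - 1 + a) by rewrite ler_pdivlMr //; lra.
split.
  rewrite -[X in X <= _](mulr1 1); apply: ler_pM => //; lra.
have t2 : (pr - (N + 1)) / (pr - (N + 1) - 1 + a) <= (pr - (N + 1)) / (pr - (N + 1) - 1).
  apply: ler_wpM2l; first lra.
  rewrite lef_pV2 ?posrE //; lra.
apply: (le_trans (y := (pr - 1) / (pr - 1 - N) * ((pr - (N + 1)) / (pr - (N + 1) - 1)))).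
  apply: ler_pM => //; first lra.
  apply: divr_ge0; lra.
rewrite le_eqVlt; apply/orP; left; apply/eqP.
field; apply/andP; split; rewrite gt_eqF //; lra.
Qed.
End S.
Arguments P {R}. Arguments Q {R}. Arguments e {R}. Arguments e_ge0 {R}. Arguments Pb {R}. Arguments Qb {R}.

Theorem lemmaC2 (R : realType) (a : R) (ha0 : 0 <= a) (ha1 : a <= 1) :
  exists c1 c2 : R, 0 < c1 /\ 0 < c2 /\
    forall p j : nat, (0 < p)%N -> ~~ odd p -> (1 <= j)%N -> (j <= p./2 - 1)%N ->
      c1 * ((j.+1)%:R^-1 `^ (1 - a)) <= gC2 p a j /\
      gC2 p a j <= c2 * ((j.+1)%:R^-1 `^ (1 - a)).

Proof.
exists 1, 4; split; first lra; split; first lra.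
move=> p j hp hodd hj1 hj2.
have hn : (2 * j + 2 <= p)%N.
  have := odd_double_half p; rewrite (negbTE hodd) add0n -muln2 => Hp; lia.
have -> : gC2 p a j = P a j * Q p a j by rewrite /gC2 big_split.
have ha : 0 <= a <= 1 by apply/andP; split.
have [P1 P2] := Pb a ha j.
have [Q1 Q2] := Qb p a ha j hn.
rewrite -/(e a j).
have e0 := e_ge0 a j.
have hp' : (2 * j + 2)%:R <= p%:R :> R by rewrite ler_nat.
rewrite natrD natrM in hp'.
have j0 : 0 <= j%:R :> R by rewrite ler0n.
have Q3 : Q p a j <= 2.
  apply: (le_trans Q2); rewrite ler_pdivrMr; lra.
have x0 : 0 <= (j.+1)%:R^-1 :> R by rewrite invr_ge0 ler0n.
have P3 : P a j <= 2 * e a j.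
  have := mulr_ge0 x0 e0; rewrite mulrBl in P2 => h; apply: (le_trans P2); by rewrite gerBl mulr_ge0 ?invr_ge0 ?ler0n ?e_ge0.
have P0 : 0 <= P a j by apply: le_trans P1.
have Q0 : 0 <= Q p a j by apply: le_trans Q1.
split.
  rewrite mul1r; apply: (le_trans P1).
  rewrite -[X in X <= _]mulr1; exact: ler_wpM2l.
apply: (le_trans (ler_pM P0 Q0 P3 Q3)).
have -> : 2 * e a j * 2 = 4 * e a j by ring.
by [].
Qed.
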